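(* For every natural number $n\geq 64$, $$\iota(2^n-1)\leq n+1-\sum_{j=1}^{\lfloor \frac{\log n}{\log 2}\rfloor}\xi(n,j)+3\left\lfloor \frac{\log n}{\log 2}\right\rfloor,$$ where $0\leq \xi(n,j)<1$ are the quantities defined in the context.
   Context: An addition chain producing a positive integer $N$ is a sequence $1=s_1,2=s_2,s_3,\ldots,s_k=N$ in which every term after the first is the sum of two (not necessarily distinct) earlier terms; its length is the number of terms excluding the initial $1$ (here $k-1$). $\iota(N)$ denotes the length of the shortest addition chain producing $N$. The quantities $\xi(n,j)$ come from iterated halving of the exponent: set $n_0=n$ and $n_j=\frac{n_{j-1}-\frac{1}{2}(1-(-1)^{n_{j-1}})}{2}$ (i.e. $n_j=\lfloor n/2^j\rfloor$), and write $n_j=\frac{n}{2^j}-\xi(n,j)$; thus e.g. $\xi(n,1)=\frac{1}{4}(1-(-1)^n)$, and $0\leq \xi(n,j)<1$, with $\xi(n,j)=0$ for all $j$ when $n$ is a power of $2$. $\log$ is the natural logarithm and $\lfloor\cdot\rfloor$ the floor function. *)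

(* Defs.v *)
From HB Require Import structures.
From mathcomp Require Import all_boot all_order all_algebra.
From mathcomp Require Import boolp reals exp.
Set Implicit Arguments. Unset Strict Implicit. Unset Printing Implicit Defensive.
Import Order.TTheory GRing.Theory Num.Theory.

Definition is_addchain (s : seq nat) : bool :=
  (nth 0 s 0 == 1) &&
  all (fun i => [exists j : 'I_i, exists k : 'I_i,
                   nth 0 s i == nth 0 s j + nth 0 s k])
      (iota 1 (size s).-1).

(* s is an addition chain producing N, of length size s - 1 *)
Definition chain_produces (s : seq nat) (N : nat) : bool :=
  is_addchain s && (0 < size s) && (last 0 s == N).

Definition has_chain_of_length (N k : nat) : bool :=
  `[< exists s : seq nat, chain_produces s N /\ size s = k.+1 >].

Lemma chain_exists (N : nat) : exists k, has_chain_of_length N.+1 k.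
Proof.
exists N; apply/asboolP; exists (iota 1 N.+1); split; last by rewrite size_iota.
have Hn : forall i, i < N.+1 -> nth 0 (iota 1 N.+1) i = i.+1.
  by move=> i Hi; rewrite nth_iota // add1n.
rewrite /chain_produces /is_addchain size_iota (last_nth 0) size_iota.
rewrite (Hn 0) // [nth 0 (0 :: _) _]/= (Hn N) // !eqxx !andbT.
rewrite [true && _]andTb.
apply/allP => i; rewrite mem_iota => /andP [i1 iN].
move: i i1 iN => [|i] // _ iN.
have iN' : i < N by move: iN; rewrite add1n.
apply/fintype.existsP; exists ord_max; apply/fintype.existsP; exists ord0.
rewrite (Hn i.+1) // (Hn (nat_of_ord (@ord_max i))) ?(Hn (nat_of_ord (@ord0 i))) //=.
  by rewrite addn1.
by rewrite ltnW.
Qed.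

(* iota_ac N = the length of a shortest addition chain producing N (N >= 1);
   for N = 0 no chain exists and the value 0 is a junk default. *)
Definition iota_ac (N : nat) : nat :=
  match N with
  | 0 => 0
  | N'.+1 => ex_minn (chain_exists N')
  end.

(* n_j : n_0 = n, n_j = (n_{j-1} - (1 - (-1)^{n_{j-1}})/2) / 2, i.e. halving
   after removing the parity bit (this is n_{j-1} ./2). *)
Fixpoint nhalf (n j : nat) : nat :=
  match j with
  | 0 => n
  | j'.+1 => (nhalf n j' - odd (nhalf n j')) %/ 2
  end.

Local Open Scope ring_scope.

Definition xi {R : realType} (n j : nat) : R :=
  n%:R / 2 ^+ j - (nhalf n j)%:R.

Definition flog2 {R : realType} (n : nat) : int :=
  Num.floor (ln (n%:R : R) / ln 2).

(* Main.v *)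
Require Import Defs.
From HB Require Import structures.
From mathcomp Require Import all_boot all_order all_algebra.
From mathcomp Require Import boolp reals exp.
From mathcomp Require Import zify lra.
Import Order.TTheory GRing.Theory Num.Theory.

Lemma iota_le N s : (0 < N)%N -> is_addchain s -> (0 < size s)%N -> last 0 s = N ->
  (iota_ac N <= (size s).-1)%N.
Proof.
case: N => // N _ h1 h2 h3; rewrite /iota_ac.
case: ex_minnP => k hk hmin; apply: hmin; apply/asboolP; exists s; split.
  by rewrite /chain_produces h1 h2 h3 eqxx.
by rewrite prednK.
Qed.

Lemma nhalfE n j : nhalf n j = (n %/ 2 ^ j)%N.
Proof.
elim: j => [|j IH] /=; first by rewrite expn0 divn1.
rewrite IH expnS mulnC divnMA.
move: (n %/ 2 ^ j)%N => q.
have := odd_double_half q; rewrite -muln2; lia.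
Qed.

Lemma ac_rcons {s a b} : is_addchain s -> (0 < size s)%N -> a \in s -> b \in s ->
  is_addchain (rcons s (a + b)).
Proof.
move=> /andP[h0 /allP hall] hs ha hb.
apply/andP; split; first by rewrite nth_rcons hs.
apply/allP => i; rewrite mem_iota size_rcons /= => /andP[i1 ilt].
case: (ltnP i (size s)) => his.
  have := hall i; rewrite mem_iota i1 add1n prednK // his => /(_ isT).
  move=> /existsP [j' /existsP [k' /eqP e]].
  apply/existsP; exists j'; apply/existsP; exists k'.
  rewrite !nth_rcons his (ltn_trans (ltn_ord j') his) (ltn_trans (ltn_ord k') his) e //.
have -> : i = size s by move: ilt; rewrite add1n => ilt; apply/eqP; rewrite eqn_leq his -ltnS ilt.
have hja : (index a s < size s)%N by rewrite index_mem.
have hjb : (index b s < size s)%N by rewrite index_mem.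
apply/existsP; exists (Ordinal hja); apply/existsP; exists (Ordinal hjb).
by rewrite /= !nth_rcons ltnn eqxx hja hjb !nth_index.
Qed.

Lemma last_in {s} : (0 < size s)%N -> last 0 s \in s.
Proof. by case: s => // x s _; exact: mem_last. Qed.

Lemma one_in {s} : is_addchain s -> (0 < size s)%N -> 1%N \in s.
Proof. by move=> /andP[/eqP h0 _] hs; rewrite -h0 mem_nth. Qed.

Lemma ac_double t s : is_addchain s -> (0 < size s)%N -> exists s',
  [/\ is_addchain s', size s' = (size s + t)%N, last 0 s' = (last 0 s * 2 ^ t)%N
    & {subset s <= s'}].
Proof.
elim: t s => [|t IH] s hs hsz.
  by exists s; split; rewrite ?addn0 ?muln1.
have h1 := ac_rcons hs hsz (last_in hsz) (last_in hsz).
have hsz1 : (0 < size (rcons s (last 0 s + last 0 s)))%N by rewrite size_rcons.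
have [s' [a1 a2 a3 a4]] := IH _ h1 hsz1.
exists s'; split => //.
- by rewrite a2 size_rcons addSnnS.
- by rewrite a3 last_rcons expnS; lia.
- by move=> x hx; apply: a4; rewrite mem_rcons in_cons hx orbT.
Qed.

Lemma ac_mersenne n : (0 < n)%N -> forall m, (n < 2 ^ m.+1)%N ->
  exists s, [/\ is_addchain s, (0 < size s)%N, last 0 s = (2 ^ n - 1)%N
    & (size s <= n + 2 * m + 2)%N].
Proof.
elim/ltn_ind: n => n IH n0 m hm.
case: (ltnP n 2) => n2.
  have -> : n = 1%N by lia.
  by exists [:: 1%N]; split => //; lia.
set h := n./2.
have hn : n = (odd n + h.*2)%N by rewrite odd_double_half.
have h0 : (0 < h)%N by lia.
have hh : (h < n)%N by lia.
case: m hm => [|m] hm; first by move: hm; rewrite expn1; lia.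
have hm' : (h < 2 ^ m.+1)%N by move: hm; rewrite expnS; lia.
have [s [s1 s2 s3 s4]] := IH h hh h0 m hm'.
have [s' [t1 t2 t3 t4]] := ac_double h s s1 s2.
have hin : (2 ^ h - 1)%N \in s' by apply: t4; rewrite -s3 last_in.
have t2' : (0 < size s')%N by rewrite t2; lia.
have u1 := ac_rcons t1 t2' (last_in t2') hin.
set s'' := rcons s' (last 0 s' + (2 ^ h - 1)).
have hp : (1 <= 2 ^ h)%N by rewrite expn_gt0.
have u3 : last 0 s'' = (2 ^ h.*2 - 1)%N.
  rewrite last_rcons t3 s3 -addnn expnD.
  move: hp; set p := (2 ^ h)%N => hp; nia.
have u2 : (0 < size s'')%N by rewrite size_rcons.
case ho: (odd n) hn => hn.
- have v1 := ac_rcons u1 u2 (last_in u2) (last_in u2).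
  set s3' := rcons s'' (last 0 s'' + last 0 s'').
  have v2 : (0 < size s3')%N by rewrite size_rcons.
  have w1 := ac_rcons v1 v2 (last_in v2) (one_in v1 v2).
  exists (rcons s3' (last 0 s3' + 1)); split => //.
  + by rewrite size_rcons.
  + rewrite last_rcons /s3' last_rcons u3 hn expnS.
    have : (1 <= 2 ^ h.*2)%N by rewrite expn_gt0.
    move: (2 ^ h.*2)%N => q; lia.
  + rewrite size_rcons /s3' size_rcons /s'' size_rcons t2; lia.
- exists s''; split => //.
  + by rewrite u3 hn.
  + rewrite /s'' size_rcons t2; lia.
Qed.

Local Open Scope ring_scope.
Lemma xi_le1 (R : realType) n j : @xi R n j <= 1.
Proof.
rewrite /xi nhalfE lerBlDr.
have hp : (0 : R) < 2 ^+ j by rewrite exprn_gt0.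
rewrite ler_pdivrMr // -(natrX R 2 j) [1 + _]addrC natr1 -natrM ler_nat.
by rewrite mulSn addnC {1}(divn_eq n (2 ^ j)) leq_add2l ltnW // ltn_mod expn_gt0.

Qed.

Lemma flog2_prop (R : realType) n : (1 <= n)%N ->
  exists k : nat, @flog2 R n = k%:Z /\ (n < 2 ^ k.+1)%N.
Proof.
move=> hn.
have l2 : (0 : R) < ln 2 by apply: ln_gt0; rewrite ltr1n.
have hn' : (1 : R) <= n%:R by rewrite ler1n.
have hx : (0 : R) <= ln (n%:R : R) / ln 2.
  by apply: divr_ge0; [exact: ln_ge0 | exact: ltW].
have := floor_ge0 (ln (n%:R : R) / ln 2); rewrite hx.
have := floorD1_gt (ln (n%:R : R) / ln 2).
rewrite /flog2; case: (Num.floor (ln (n%:R : R) / ln 2)) => // k hk _.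
exists k; split => //.
have : ln (n%:R : R) < ln (2 ^+ k.+1).
  rewrite lnXn ?ltr0n //.
  move: hk; rewrite ltr_pdivrMr // intrD -[_ *+ k.+1]mulr_natr mulrC -[k.+1%:R]natr1.
  exact: id.
rewrite ltr_ln ?posrE ?exprn_gt0 ?ltr0n //.

by rewrite -natrX ltr_nat.
Qed.

Theorem mainTheorem1 (R : realType) (n : nat) (hn : (64 <= n)%N) :
  ((iota_ac (2 ^ n - 1)%N)%:R : R) <=
    n%:R + 1 - (\sum_(1 <= j < (absz (@flog2 R n)).+1) @xi R n j)
    + 3 * (@flog2 R n)%:~R.
Proof.
have n1 : (1 <= n)%N by apply: leq_trans hn.
have [k [hk hkn]] := @flog2_prop R n n1.
have [s [s1 s2 s3 s4]] := @ac_mersenne n n1 k hkn.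
have hN : (0 < 2 ^ n - 1)%N.
  have : (2 ^ 1 <= 2 ^ n)%N by rewrite leq_exp2l.
  rewrite expn1; lia.
have hL := @iota_le _ s hN s1 s2 s3.
rewrite hk /=.
have hS : \sum_(1 <= j < k.+1) @xi R n j <= k%:R.
  apply: le_trans (ler_sum _ (fun j _ => xi_le1 R n j)) _.
  rewrite sumr_const_nat subn1 /=.
  by [].
have e : ((k%:Z)%:~R : R) = k%:R by [].
rewrite -pmulrn.
apply: (le_trans (y := ((n + 2 * k + 1)%N)%:R)).
  rewrite ler_nat; lia.
rewrite !natrD ?natrM addr0.
move: hS; set S := \sum_(_ <= _ < _) _ => hS.
lra.
Qed.
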